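(* Let $m\ge 2$. If the Lucas numbers are complete mod $m$, then every Gibonacci sequence $\{G_n(a,b)\}$ (with $\gcd(a,b)=1$) is complete mod $m$.
   Context: For integers $a,b$ with $\gcd(a,b)=1$, the Gibonacci sequence $\{G_n(a,b)\}_{n\ge1}$ is defined by $G_1=a$, $G_2=b$, $G_{n+1}=G_{n-1}+G_n$. The Lucas numbers are $L_n=G_n(1,3)$. A sequence is complete mod $m$ if every residue class modulo $m$ contains some term of the sequence. *)

(* Defs.v *)
From Stdlib Require Import ZArith.
Open Scope Z_scope.

(* gib a b n = G_{n+1}(a,b): gib a b 0 = G_1 = a, gib a b 1 = G_2 = b. *)
Fixpoint gib_aux (a b : Z) (n : nat) : Z * Z :=
  match n with
  | O => (a, b)
  | S k => let (x, y) := gib_aux a b k in (y, x + y)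
  end.

(* G n a b = G_n(a,b) for n >= 1 (index 0 is unused; set to b - a). *)
Definition G (a b : Z) (n : nat) : Z :=
  match n with
  | O => b - a
  | S k => fst (gib_aux a b k)
  end.

Definition L (n : nat) : Z := G 1 3 n.

Definition complete_mod (s : nat -> Z) (m : Z) : Prop :=
  forall r : Z, exists n : nat, (1 <= n)%nat /\ s n mod m = r mod m.

(* Main.v *)
Require Import Defs.
From Stdlib Require Import ZArith.
Open Scope Z_scope.
From Stdlib Require Import Lia List Znumtheory Zpow_facts.

Lemma gib_S a b k : gib_aux a b (S k) =
  (snd (gib_aux a b k), fst (gib_aux a b k) + snd (gib_aux a b k)).
Proof. simpl. destruct (gib_aux a b k); reflexivity. Qed.

Lemma gib_shift a b k : gib_aux a b (S k) = gib_aux b (a+b) k.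
Proof.
  induction k as [|k IH]; [reflexivity|].
  rewrite gib_S, IH, <- gib_S. reflexivity.
Qed.

Lemma gib_add a b j k : gib_aux a b (j + k)%nat =
  gib_aux (fst (gib_aux a b j)) (snd (gib_aux a b j)) k.
Proof.
  induction k as [|k IH].
  - rewrite Nat.add_0_r. simpl. destruct (gib_aux a b j); reflexivity.
  - rewrite Nat.add_succ_r, gib_S, IH, gib_S. reflexivity.
Qed.

Lemma L_gib n : L n = fst (gib_aux 2 1 n).
Proof.
  destruct n as [|k]; [reflexivity|].
  unfold L, G. rewrite gib_shift. reflexivity.
Qed.

Lemma G_gib a b k : G a b (S k) = fst (gib_aux a b k).
Proof. reflexivity. Qed.

Definition eqv (m : Z) (u v : Z * Z) : Prop :=
  fst u mod m = fst v mod m /\ snd u mod m = snd v mod m.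

Lemma gib_cong m a b c d k : eqv m (a,b) (c,d) -> eqv m (gib_aux a b k) (gib_aux c d k).
Proof.
  intros H. induction k as [|k IH]; [exact H|].
  rewrite !gib_S. destruct IH as [H1 H2]. split; simpl; [exact H2|].
  rewrite Zplus_mod, H1, H2, <- Zplus_mod. reflexivity.
Qed.

Lemma eqv_trans m u v w : eqv m u v -> eqv m v w -> eqv m u w.
Proof. unfold eqv; intros [? ?] [? ?]; split; congruence. Qed.

Lemma gib_period m a b P : eqv m (gib_aux a b P) (a,b) ->
  forall q x, eqv m (gib_aux a b (q*P + x)%nat) (gib_aux a b x).
Proof.
  intros HP q. induction q as [|q IH]; intros x; [split; reflexivity|].
  replace (S q * P + x)%nat with (P + (q*P + x))%nat by lia.
  rewrite gib_add. eapply eqv_trans; [|apply IH].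
  apply gib_cong. destruct (gib_aux a b P) as [u v] eqn:E. exact HP.
Qed.

Lemma incomplete_check m P r : 0 < m -> (0 < P)%nat ->
  eqv m (gib_aux 2 1 P) (2,1) ->
  forallb (fun k => negb (Z.eqb (fst (gib_aux 2 1 k) mod m) (r mod m))) (seq 0 P) = true ->
  ~ complete_mod L m.
Proof.
  intros Hm HP Hper Hchk Hc.
  destruct (Hc r) as [n [_ Hn]].
  rewrite L_gib in Hn.
  pose proof (gib_period _ _ _ _ Hper (n / P) (n mod P)) as [H1 _].
  rewrite (Nat.div_mod n P) in Hn by lia.
  rewrite Nat.mul_comm in Hn.
  rewrite H1 in Hn.
  rewrite forallb_forall in Hchk.
  specialize (Hchk (n mod P)%nat).
  rewrite in_seq in Hchk.
  assert (n mod P < P)%nat by (apply Nat.mod_upper_bound; lia).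
  specialize (Hchk ltac:(lia)).
  rewrite Hn, Z.eqb_refl in Hchk. discriminate.
Qed.

Lemma complete_div s m d : 0 < d -> (d | m) -> 0 < m -> complete_mod s m -> complete_mod s d.
Proof.
  intros Hd Hdm Hm Hc r. destruct (Hc r) as [n [Hn1 Hn2]]. exists n. split; auto.
  rewrite (Zmod_div_mod d m (s n)), (Zmod_div_mod d m r) by auto. congruence.
Qed.

Ltac inc_check m P r := apply (incomplete_check m P r); [lia|lia|vm_compute; split; reflexivity|vm_compute; reflexivity].

Lemma inc5 : ~ complete_mod L 5. Proof. inc_check 5 4%nat 0. Qed.
Lemma inc8 : ~ complete_mod L 8. Proof. inc_check 8 12%nat 0. Qed.
Lemma inc12 : ~ complete_mod L 12. Proof. inc_check 12 24%nat 0. Qed.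
Lemma inc18 : ~ complete_mod L 18. Proof. inc_check 18 24%nat 5. Qed.
Lemma inc21 : ~ complete_mod L 21. Proof. inc_check 21 16%nat 0. Qed.
Lemma inc28 : ~ complete_mod L 28. Proof. inc_check 28 48%nat 0. Qed.
Lemma inc49 : ~ complete_mod L 49. Proof. inc_check 49 112%nat 5. Qed.


Definition condb (m a0 b0 : Z) : bool :=
  forallb (fun p => negb (Z.eqb (Z.gcd p m) p && Z.eqb (a0 mod p) 0 && Z.eqb (b0 mod p) 0)) (2::3::7::nil).

Definition small_check (m : Z) (K : nat) : bool :=
  forallb (fun a0 => forallb (fun b0 =>
     orb (negb (condb m a0 b0))
     (forallb (fun r => existsb (fun k => Z.eqb (fst (gib_aux a0 b0 k) mod m) r) (seq 0 K))
       (map Z.of_nat (seq 0 (Z.to_nat m)))))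
   (map Z.of_nat (seq 0 (Z.to_nat m)))) (map Z.of_nat (seq 0 (Z.to_nat m))).

Lemma div_of_mod p m a : 0 < m -> (p | m) -> (p | a mod m) -> (p | a).
Proof.
  intros Hm H1 H2. rewrite (Z.div_mod a m) by lia.
  apply Z.divide_add_r; [apply Z.divide_mul_l|]; auto.
Qed.

Lemma in_range m x : 0 < m -> In (x mod m) (map Z.of_nat (seq 0 (Z.to_nat m))).
Proof.
  intros Hm. apply in_map_iff. exists (Z.to_nat (x mod m)).
  pose proof (Z.mod_pos_bound x m Hm).
  split; [lia|]. apply in_seq. lia.
Qed.

Lemma small_ok m K : 0 < m -> small_check m K = true ->
  forall a b, Z.gcd a b = 1 -> complete_mod (G a b) m.
Proof.
  intros Hm Hchk a b Hab r.
  unfold small_check in Hchk. rewrite forallb_forall in Hchk.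
  specialize (Hchk _ (in_range m a Hm)). rewrite forallb_forall in Hchk.
  specialize (Hchk _ (in_range m b Hm)).
  apply Bool.orb_true_iff in Hchk. destruct Hchk as [Hc|Hc].
  - exfalso. apply Bool.negb_true_iff in Hc. unfold condb in Hc.
    apply Bool.not_true_iff_false in Hc. apply Hc.
    apply forallb_forall. intros p Hp. apply Bool.negb_true_iff.
    apply Bool.not_true_iff_false. intros H.
    apply andb_prop in H as [H Hb]. apply andb_prop in H as [Hg Ha].
    apply Z.eqb_eq in Hg, Ha, Hb.
    assert (Hp0 : 1 < p) by (simpl in Hp; lia).
    assert (Hpm : (p | m)) by (rewrite <- Hg; apply Z.gcd_divide_r).
    apply Z.mod_divide in Ha; [|lia]. apply Z.mod_divide in Hb; [|lia].
    apply (div_of_mod _ _ _ Hm Hpm) in Ha. apply (div_of_mod _ _ _ Hm Hpm) in Hb.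
    assert (Hd : (p | Z.gcd a b)) by (apply Z.gcd_greatest; auto).
    rewrite Hab in Hd. apply Z.divide_pos_le in Hd; lia.
  - rewrite forallb_forall in Hc. specialize (Hc _ (in_range m r Hm)).
    apply existsb_exists in Hc. destruct Hc as [k [_ Hk]].
    apply Z.eqb_eq in Hk. exists (S k). split; [lia|].
    rewrite G_gib.
    assert (E : eqv m (a,b) (a mod m, b mod m)) by (split; simpl; rewrite Zmod_mod; reflexivity).
    destruct (gib_cong m _ _ _ _ k E) as [E1 _]. rewrite E1, Hk. reflexivity.
Qed.

Lemma small2 : forall a b, Z.gcd a b = 1 -> complete_mod (G a b) 2.
Proof. apply (small_ok 2 48); [lia| vm_compute; reflexivity]. Qed.
Lemma small4 : forall a b, Z.gcd a b = 1 -> complete_mod (G a b) 4.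
Proof. apply (small_ok 4 48); [lia| vm_compute; reflexivity]. Qed.
Lemma small6 : forall a b, Z.gcd a b = 1 -> complete_mod (G a b) 6.
Proof. apply (small_ok 6 48); [lia| vm_compute; reflexivity]. Qed.
Lemma small7 : forall a b, Z.gcd a b = 1 -> complete_mod (G a b) 7.
Proof. apply (small_ok 7 48); [lia| vm_compute; reflexivity]. Qed.
Lemma small14 : forall a b, Z.gcd a b = 1 -> complete_mod (G a b) 14.
Proof. apply (small_ok 14 48); [lia| vm_compute; reflexivity]. Qed.

Definition pm (u v : Z*Z) : Z*Z :=
  (fst u * fst v + snd u * snd v, fst u * snd v + snd u * fst v + snd u * snd v).
Definition pa (u v : Z*Z) : Z*Z := (fst u + fst v, snd u + snd v).
Definition sc (c : Z) (u : Z*Z) : Z*Z := (c * fst u, c * snd u).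
Definition phi : Z*Z := (0,1).
Fixpoint pw (u : Z*Z) (n : nat) : Z*Z :=
  match n with O => (1,0) | S k => pm u (pw u k) end.

Ltac pr := repeat match goal with p : (Z*Z)%type |- _ => destruct p end;
  unfold pm, pa, sc, phi; cbn [fst snd]; f_equal; ring.

Lemma pm_assoc u v w : pm (pm u v) w = pm u (pm v w). Proof. pr. Qed.
Lemma pm_comm u v : pm u v = pm v u. Proof. pr. Qed.
Lemma pm_1l u : pm (1,0) u = u. Proof. pr. Qed.

Lemma pw_add u a b : pw u (a + b) = pm (pw u a) (pw u b).
Proof. induction a; simpl. - rewrite pm_1l; auto. - rewrite IHa, pm_assoc; auto. Qed.

Lemma pw_mul u a b : pw u (a * b) = pw (pw u a) b.
Proof.
  induction b; simpl. - rewrite Nat.mul_0_r; auto.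
  - rewrite Nat.mul_succ_r, Nat.add_comm, pw_add, IHb. auto.
Qed.

Lemma gib_pw x y k : gib_aux x y k = pm (pw phi k) (x,y).
Proof.
  induction k; [simpl; unfold pm; cbn [fst snd]; f_equal; ring|].
  rewrite gib_S, IHk. change (pw phi (S k)) with (pm phi (pw phi k)). rewrite pm_assoc.
  destruct (pm (pw phi k) (x,y)) as [a b]. unfold pm, phi; cbn [fst snd]. f_equal; ring.
Qed.

Definition cg (M x y : Z) := (M | x - y).
Definition cgp (M : Z) (u v : Z*Z) := cg M (fst u) (fst v) /\ cg M (snd u) (snd v).

Lemma cg_refl M x : cg M x x. Proof. unfold cg. rewrite Z.sub_diag. apply Z.divide_0_r. Qed.
Lemma cg_sym M x y : cg M x y -> cg M y x.
Proof. unfold cg; intros H. replace (y - x) with (-(x-y)) by ring. apply Z.divide_opp_r; auto. Qed.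
Lemma cg_trans M x y z : cg M x y -> cg M y z -> cg M x z.
Proof. unfold cg; intros H1 H2. replace (x - z) with ((x-y)+(y-z)) by ring. apply Z.divide_add_r; auto. Qed.
Lemma cg_add M x y x' y' : cg M x x' -> cg M y y' -> cg M (x+y) (x'+y').
Proof. unfold cg; intros H1 H2. replace (x + y - (x'+y')) with ((x-x')+(y-y')) by ring. apply Z.divide_add_r; auto. Qed.
Lemma cg_mul M x y x' y' : cg M x x' -> cg M y y' -> cg M (x*y) (x'*y').
Proof. unfold cg; intros H1 H2. replace (x * y - (x'*y')) with ((x-x')*y+x'*(y-y')) by ring.
  apply Z.divide_add_r; [apply Z.divide_mul_l|apply Z.divide_mul_r]; auto. Qed.
Lemma cg_eq M x y : x = y -> cg M x y. Proof. intros ->; apply cg_refl. Qed.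
Lemma cg_scale M T x y : cg M x y -> cg (T*M) (T*x) (T*y).
Proof. unfold cg; intros [k Hk]. exists k. rewrite <- Z.mul_sub_distr_l, Hk. ring. Qed.
Lemma cg_div M N x y : cg (M*N) x y -> cg M x y.
Proof. unfold cg; intros [k Hk]. exists (k*N). rewrite Hk. ring. Qed.

Lemma cgp_refl M u : cgp M u u. Proof. split; apply cg_refl. Qed.
Lemma cgp_sym M u v : cgp M u v -> cgp M v u. Proof. intros [? ?]; split; apply cg_sym; auto. Qed.
Lemma cgp_trans M u v w : cgp M u v -> cgp M v w -> cgp M u w.
Proof. intros [? ?] [? ?]; split; eapply cg_trans; eauto. Qed.
Lemma cgp_eq M u v : u = v -> cgp M u v. Proof. intros ->; apply cgp_refl. Qed.
Lemma cgp_pm M u v u' v' : cgp M u u' -> cgp M v v' -> cgp M (pm u v) (pm u' v').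
Proof. intros [? ?] [? ?]; split; simpl; repeat apply cg_add; apply cg_mul; auto. Qed.
Lemma cgp_pa M u v u' v' : cgp M u u' -> cgp M v v' -> cgp M (pa u v) (pa u' v').
Proof. intros [? ?] [? ?]; split; simpl; apply cg_add; auto. Qed.
Lemma cgp_sc M c c' u u' : cg M c c' -> cgp M u u' -> cgp M (sc c u) (sc c' u').
Proof. intros ? [? ?]; split; simpl; apply cg_mul; auto. Qed.
Lemma cgp_scale M T u v : cgp M u v -> cgp (T*M) (sc T u) (sc T v).
Proof. intros [? ?]; split; simpl; apply cg_scale; auto. Qed.
Lemma cgp_div M N u v : cgp (M*N) u v -> cgp M u v.
Proof. intros [? ?]; split; eapply cg_div; eauto. Qed.
Lemma cgp_pw M u v n : cgp M u v -> cgp M (pw u n) (pw v n).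
Proof. intros H; induction n; simpl; [apply cgp_refl|apply cgp_pm; auto]. Qed.

Lemma pw_one j : pw (1,0) j = (1,0).
Proof. induction j; simpl; [auto|]. rewrite IHj. unfold pm; cbn [fst snd]; f_equal; ring. Qed.

Lemma cgp_addzero M N x z : (M | N) -> cgp M (pa x (sc N z)) x.
Proof.
  intros H. split; unfold cg; cbn [fst snd pa sc];
  [replace (fst x + N * fst z - fst x) with (N * fst z) by ring
  |replace (snd x + N * snd z - snd x) with (N * snd z) by ring];
  apply Z.divide_mul_l; auto.
Qed.

Lemma not3_sq x : ~ (3 | x) -> cg 3 (x*x) 1.
Proof.
  intros H. unfold cg.
  assert (Hx : x = 3 * (x/3) + x mod 3) by (apply Z.div_mod; lia).
  pose proof (Z.mod_pos_bound x 3 ltac:(lia)).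
  set (q := x/3) in *. set (r := x mod 3) in *.
  assert (r = 0 \/ r = 1 \/ r = 2) as [Hr|[Hr|Hr]] by lia.
  - exfalso. apply H. exists q. lia.
  - exists (3*q*q + 2*q). rewrite Hx, Hr. ring.
  - exists (3*q*q + 4*q + 1). rewrite Hx, Hr. ring.
Qed.

Lemma theta K : exists th, pw phi (8 * 3^K) = pa (1,0) (sc (3^(Z.of_nat K + 1)) th) /\ ~ (3 | snd th).
Proof.
  induction K as [|K [th [Hth H3]]].
  - exists (4,7). split; [vm_compute; reflexivity|].
    intros H. apply Z.mod_divide in H; [|lia]. vm_compute in H. discriminate.
  - set (S0 := 3 ^ Z.of_nat K).
    assert (HT : 3 ^ (Z.of_nat K + 1) = 3 * S0).
    { unfold S0. rewrite Z.pow_add_r by lia. ring. }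
    assert (HT2 : 3 ^ (Z.of_nat (S K) + 1) = 3 * (3 * S0)).
    { unfold S0. rewrite Nat2Z.inj_succ, <- Z.add_1_r, !Z.pow_add_r by lia. ring. }
    exists (pa th (pa (sc (3*S0) (pm th th)) (sc (3*S0*S0) (pm th (pm th th))))).
    split.
    + replace (8 * 3 ^ S K)%nat with (8 * 3^K * 3)%nat by (rewrite Nat.pow_succ_r'; lia).
      rewrite pw_mul, Hth, HT, HT2.
      destruct th as [t1 t2]. cbn [pw]. unfold pm, pa, sc. cbn [fst snd]. f_equal; ring.
    + destruct th as [t1 t2]. cbn [pa sc pm fst snd] in *. intros Hd. apply H3.
      match type of Hd with (3 | ?e) =>
        replace t2 with (e - 3 * (S0 * (t1 * t2 + t2 * t1 + t2 * t2) + S0 * S0 *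
          (t1 * (t1 * t2 + t2 * t1 + t2 * t2) + t2 * (t1 * t1 + t2 * t2) + t2 * (t1 * t2 + t2 * t1 + t2 * t2)))) by ring end.
      apply Z.divide_sub_r; auto. apply Z.divide_factor_l.
Qed.

Lemma binom T th t : (3*T | T*T) ->
  cgp (3*T) (pw (pa (1,0) (sc T th)) t) (pa (1,0) (sc (T * Z.of_nat t) th)).
Proof.
  intros HT. induction t as [|t IH].
  - apply cgp_eq. destruct th; unfold pa, sc; cbn [pw fst snd]; f_equal; ring.
  - cbn [pw]. eapply cgp_trans; [apply cgp_pm; [apply cgp_refl|exact IH]|].
    eapply cgp_trans; [apply cgp_eq|apply (cgp_addzero _ (T*T) _ (sc (Z.of_nat t) (pm th th)) HT)].
    rewrite Nat2Z.inj_succ. destruct th; unfold pa, sc, pm; cbn [fst snd]; f_equal; ring.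
Qed.

Lemma cg_mod M x : 0 < M -> cg M x (x mod M).
Proof. intros H. unfold cg. exists (x / M). rewrite (Z.div_mod x M) at 1 by lia. ring. Qed.

Lemma cg_of_mod M x y : 0 < M -> x mod M = y mod M -> cg M x y.
Proof.
  intros H E. eapply cg_trans; [apply cg_mod; auto|]. rewrite E. apply cg_sym, cg_mod; auto.
Qed.

Lemma mod_of_cg M x y : 0 < M -> cg M x y -> x mod M = y mod M.
Proof.
  intros H [k Hk]. replace x with (y + k * M) by lia. apply Z_mod_plus_full.
Qed.

Definition base_check : bool :=
  forallb (fun a0 => forallb (fun b0 =>
    orb (andb (Z.eqb a0 0) (Z.eqb b0 0))
    (existsb (fun j => andb (Z.eqb ((fst (pw phi j) - a0) mod 3) 0) (Z.eqb ((snd (pw phi j) - b0) mod 3) 0))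
      (seq 0 8))) (0::1::2::nil)) (0::1::2::nil).

Lemma lift_base w : ~ ((3 | fst w) /\ (3 | snd w)) -> exists j, cgp 3 w (pw phi j).
Proof.
  intros Hw.
  assert (Hb : base_check = true) by (vm_compute; reflexivity).
  unfold base_check in Hb. rewrite forallb_forall in Hb.
  assert (Hin : forall x, In (x mod 3) (0::1::2::nil)).
  { intros x. pose proof (Z.mod_pos_bound x 3 ltac:(lia)).
    assert (x mod 3 = 0 \/ x mod 3 = 1 \/ x mod 3 = 2) as [E|[E|E]] by lia; rewrite E; simpl; auto. }
  specialize (Hb _ (Hin (fst w))). rewrite forallb_forall in Hb.
  specialize (Hb _ (Hin (snd w))). apply Bool.orb_true_iff in Hb as [Hb|Hb].
  - exfalso. apply andb_prop in Hb as [H1 H2]. apply Z.eqb_eq in H1, H2.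
    apply Hw. split; apply Z.mod_divide; auto; lia.
  - apply existsb_exists in Hb as [j [_ Hj]]. exists j.
    apply andb_prop in Hj as [H1 H2]. apply Z.eqb_eq in H1, H2.
    apply Z.mod_divide in H1; [|lia]. apply Z.mod_divide in H2; [|lia].
    split; (eapply cg_trans; [apply cg_mod; lia|]); apply cg_sym; auto.
Qed.

Lemma sc_pm_l c u v : sc c (pm u v) = pm (sc c u) v. Proof. pr. Qed.

Lemma phi8j j : cgp 3 (pw phi (8*j)) (1,0).
Proof.
  rewrite pw_mul. rewrite <- (pw_one j). apply cgp_pw.
  split; unfold cg; vm_compute; [exists 4|exists 7]; reflexivity.
Qed.

Lemma lift K : forall w, ~ ((3 | fst w) /\ (3 | snd w)) ->
  exists c j, ~ (3 | c) /\ cgp (3^(Z.of_nat K + 1)) w (sc c (pw phi j)).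
Proof.
  induction K as [|K IH]; intros w Hw.
  - destruct (lift_base w Hw) as [j Hj]. exists 1, j. split.
    + intros H. apply Z.divide_pos_le in H; lia.
    + replace (sc 1 (pw phi j)) with (pw phi j) by (generalize (pw phi j); intros; pr). exact Hj.
  - destruct (IH w Hw) as [c [j [Hc Hcj]]].
    destruct (theta K) as [th [Hth H3]].
    set (T := 3 ^ (Z.of_nat K + 1)) in *.
    assert (HTpos : 0 < T) by (unfold T; apply Z.pow_pos_nonneg; lia).
    assert (HT3 : 3 ^ (Z.of_nat (S K) + 1) = 3 * T).
    { unfold T. rewrite Nat2Z.inj_succ, <- Z.add_1_r, (Z.pow_add_r 3 (Z.of_nat K + 1) 1) by lia. ring. }
    assert (HTT : (3*T | T*T)).
    { unfold T. rewrite Z.pow_add_r by lia. exists (3 ^ Z.of_nat K). ring. }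
    set (v := sc c (pw phi j)) in *.
    destruct Hcj as [[d1 Hd1] [d2 Hd2]].
    set (delta := (d1, d2)).
    assert (Hw' : w = pa v (sc T delta)).
    { destruct w as [w1 w2]. destruct v as [v1 v2]. unfold pa, sc, delta. cbn [fst snd] in *. f_equal; lia. }
    set (z := sc c (pm (pw phi (7*j)) delta)).
    set (t := Z.to_nat ((snd z * snd th) mod 3)).
    set (e := fst z - Z.of_nat t * fst th).
    exists (c * (1 + T * e)), (j + t * (8 * 3^K))%nat. split.
    { intros H. apply Hc. apply Z.mod_divide in H; [|lia].
      apply Z.mod_divide; [lia|].
      rewrite Z.mul_mod, Z.add_mod in H by lia. unfold T in H.
      rewrite Z.pow_add_r, Z.pow_1_r in H by lia.
      rewrite (Z.mul_comm (3 ^ Z.of_nat K) 3), <- Z.mul_assoc, (Z.mul_comm 3), Z.mod_mul in H by lia.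
      rewrite Z.add_0_r, (Z.mod_small 1 3), Z.mul_1_r, Z.mod_mod in H by lia. exact H. }
    rewrite HT3, pw_add, (Nat.mul_comm t), pw_mul, Hth. fold T.
    assert (Hsub : cgp 3 (sc c (pm (pw phi j) (pa (e,0) (sc (Z.of_nat t) th)))) delta).
    { assert (Hz : cgp 3 (pa (e,0) (sc (Z.of_nat t) th)) z).
      { split; cbn [fst snd pa sc].
        - apply cg_eq. unfold e. ring.
        - assert (Ht : cg 3 (Z.of_nat t) (snd z * snd th)).
          { unfold t. rewrite Z2Nat.id by (apply Z.mod_pos_bound; lia). apply cg_sym, cg_mod; lia. }
          eapply cg_trans. { apply cg_add; [apply cg_refl|]. apply cg_mul; [exact Ht|apply cg_refl]. }
          eapply cg_trans. { apply cg_eq. instantiate (1 := snd z * (snd th * snd th)). ring. }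
          replace (snd z) with (snd z * 1) at 2 by ring. apply cg_mul; [apply cg_refl|]. apply not3_sq; auto. }
      eapply cgp_trans. { apply cgp_sc; [apply cg_refl|]. apply cgp_pm; [apply cgp_refl|exact Hz]. }
      eapply cgp_trans. { apply cgp_eq. unfold z.
        instantiate (1 := sc (c*c) (pm (pw phi (8*j)) delta)).
        replace (8*j)%nat with (j + 7*j)%nat by lia. rewrite pw_add.
        generalize (pw phi j) (pw phi (7*j)). intros. pr. }
      replace delta with (sc 1 (pm (1,0) delta)) at 2 by pr.
      apply cgp_sc; [apply not3_sq; auto|]. apply cgp_pm; [apply phi8j|apply cgp_refl]. }
    apply cgp_sym.
    eapply cgp_trans.
    { apply cgp_sc; [apply cg_refl|]. apply cgp_pm; [apply cgp_refl|]. apply binom. exact HTT. }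
    eapply cgp_trans.
    { apply cgp_eq.
      instantiate (1 := pa (pa v (sc T (sc c (pm (pw phi j) (pa (e,0) (sc (Z.of_nat t) th))))))
                          (sc (T*T) (sc (c*e*Z.of_nat t) (pm (pw phi j) th)))).
      unfold v. generalize (pw phi j). intros. pr. }
    eapply cgp_trans; [apply cgp_addzero; exact HTT|].
    rewrite Hw'. apply cgp_pa; [apply cgp_refl|].
    rewrite (Z.mul_comm 3 T). apply cgp_scale. exact Hsub.
Qed.

Lemma inv_mod3 c i : 0 <= i -> ~ (3 | c) -> exists u, cg (3^i) (c*u) 1.
Proof.
  intros Hi Hc.
  assert (H : rel_prime c (3^i)).
  { apply rel_prime_Zpower_r; auto. apply rel_prime_sym. apply prime_rel_prime; auto. apply prime_3. }
  destruct (rel_prime_bezout _ _ H) as [u v Huv]. exists u. exists (-v). lia.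
Qed.

Lemma G_phi a b k : G a b (S k) = fst (pm (pw phi (S k)) (b - a, a)).
Proof.
  rewrite G_gib, <- gib_pw, gib_shift. replace (b - a + a) with b by ring. reflexivity.
Qed.

Lemma L_phi n : L n = fst (pm (pw phi n) (2, 1)).
Proof. rewrite L_gib, gib_pw. reflexivity. Qed.

Lemma pow3_case K : complete_mod L (3^(Z.of_nat K + 1)) ->
  forall a b, Z.gcd a b = 1 -> complete_mod (G a b) (3^(Z.of_nat K + 1)).
Proof.
  intros HL a b Hab r.
  set (M := 3^(Z.of_nat K + 1)) in *.
  assert (HM : 0 < M) by (unfold M; apply Z.pow_pos_nonneg; lia).
  set (w := (b - a, a)).
  assert (H3b : ~ ((3 | a) /\ (3 | b))).
  { intros [H1 H2]. assert (Hd : (3 | Z.gcd a b)) by (apply Z.gcd_greatest; auto).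
    rewrite Hab in Hd. apply Z.divide_pos_le in Hd; lia. }
  set (w' := pm w (3,-1)).
  assert (Hw' : ~ ((3 | fst w') /\ (3 | snd w'))).
  { intros [H1 H2]. apply H3b. unfold w', w, pm in H1, H2. cbn [fst snd] in H1, H2.
    set (x := b - a) in *.
    assert (Ha : (3 | a)).
    { replace a with (3 * x - (x * 3 + a * -1)) by ring.
      apply Z.divide_sub_r; auto. apply Z.divide_factor_l. }
    assert (Hx : (3 | x)).
    { replace x with (2 * a - (x * -1 + a * 3 + a * -1)) by ring.
      apply Z.divide_sub_r; auto. apply Z.divide_mul_r; auto. }
    split; auto. replace b with (x + a) by (unfold x; ring). apply Z.divide_add_r; auto. }
  destruct (lift K w' Hw') as [c [j [Hc Hcj]]]. fold M in Hcj.
  assert (H5 : cgp M (sc 5 w) (sc c (pm (pw phi j) (2,1)))).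
  { assert (E1 : sc 5 w = pm w' (2,1)) by (unfold w'; generalize w; intros; pr).
    assert (E2 : pm (sc c (pw phi j)) (2,1) = sc c (pm (pw phi j) (2,1))) by (generalize (pw phi j); intros; pr).
    rewrite E1, <- E2. apply cgp_pm; [exact Hcj|apply cgp_refl]. }
  assert (N35 : ~ (3 | 5)).
  { intros H. apply Z.mod_divide in H; [|lia]. vm_compute in H. discriminate. }
  destruct (inv_mod3 5 (Z.of_nat K + 1) ltac:(lia) N35) as [i5 Hi5].
  fold M in Hi5.
  set (c0 := i5 * c).
  assert (Hw : cgp M w (sc c0 (pm (pw phi j) (2,1)))).
  { assert (E1 : w = sc 1 w) by (generalize w; intros; pr).
    assert (E2 : sc (5 * i5) w = sc i5 (sc 5 w)) by (generalize w; intros; pr).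
    assert (E3 : sc i5 (sc c (pm (pw phi j) (2,1))) = sc c0 (pm (pw phi j) (2,1)))
      by (unfold c0; generalize (pm (pw phi j) (2,1)); intros; pr).
    rewrite E1 at 1. eapply cgp_trans; [apply cgp_sc; [apply cg_sym; exact Hi5|apply cgp_refl]|].
    rewrite E2, <- E3. apply cgp_sc; [apply cg_refl|exact H5]. }
  destruct (inv_mod3 c (Z.of_nat K + 1) ltac:(lia) Hc) as [uc Huc]. fold M in Huc.
  set (u0 := 5 * uc).
  assert (Hc0 : cg M (c0 * u0) 1).
  { replace (c0 * u0) with ((5 * i5) * (c * uc)) by (unfold c0, u0; ring).
    replace 1 with (1 * 1) by ring. apply cg_mul; auto. }
  destruct (HL (u0 * r)) as [n [Hn1 Hn2]]. fold M in Hn2.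
  destruct (theta K) as [th [Hth _]]. fold M in Hth.
  set (P := (8 * 3 ^ K)%nat) in *.
  assert (HP : (1 <= P)%nat) by (unfold P; pose proof (Nat.pow_nonzero 3 K); lia).
  assert (HPj : cgp M (pw phi (j * P)) (1,0)).
  { rewrite Nat.mul_comm, pw_mul, Hth.
    eapply cgp_trans; [apply (cgp_pw M _ (1,0)); apply cgp_addzero, Z.divide_refl|].
    rewrite pw_one; apply cgp_refl. }
  set (k := (n - 1 + j * (P - 1))%nat).
  assert (Hk : (S k + j = n + j * P)%nat) by (unfold k; nia).
  exists (S k). split; [lia|].
  apply mod_of_cg; auto. rewrite G_phi.
  apply cg_trans with (fst (pm (pw phi (S k)) (sc c0 (pm (pw phi j) (2,1))))).
  { apply cgp_pm; [apply cgp_refl|exact Hw]. }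
  assert (E : pm (pw phi (S k)) (sc c0 (pm (pw phi j) (2,1)))
              = sc c0 (pm (pm (pw phi n) (pw phi (j*P))) (2,1))).
  { rewrite <- pw_add, <- Hk, pw_add. generalize (pw phi (S k)) (pw phi j). intros. pr. }
  rewrite E.
  apply cg_trans with (fst (sc c0 (pm (pm (pw phi n) (1,0)) (2,1)))).
  { apply cgp_sc; [apply cg_refl|]. apply cgp_pm; [|apply cgp_refl]. apply cgp_pm; [apply cgp_refl|exact HPj]. }
  assert (E2 : fst (sc c0 (pm (pm (pw phi n) (1,0)) (2,1))) = c0 * L n).
  { rewrite L_phi. generalize (pw phi n). intros [p1 p2]. unfold sc, pm; cbn [fst snd]. ring. }
  rewrite E2.
  apply cg_trans with (c0 * (u0 * r)).
  { apply cg_mul; [apply cg_refl|]. apply cg_of_mod; auto. }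
  replace (c0 * (u0 * r)) with ((c0 * u0) * r) by ring.
  replace r with (1 * r) at 2 by ring. apply cg_mul; auto. apply cg_refl.
Qed.

Definition allowed (m : Z) : Prop :=
  m = 2 \/ m = 4 \/ m = 6 \/ m = 7 \/ m = 14 \/ exists K, m = 3^(Z.of_nat K + 1).

Lemma inc_div m d : ~ complete_mod L d -> 0 < d -> (d | m) -> 0 < m -> ~ complete_mod L m.
Proof. intros H Hd Hdm Hm Hc. apply H. eapply complete_div; eauto. Qed.

Lemma pow3_ge K : 3 <= 3^(Z.of_nat K + 1).
Proof.
  rewrite Z.pow_add_r, Z.pow_1_r by lia.
  pose proof (Z.pow_pos_nonneg 3 (Z.of_nat K) ltac:(lia) ltac:(lia)). lia.
Qed.

Lemma pow3_9 K : (1 <= K)%nat -> (9 | 3^(Z.of_nat K + 1)).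
Proof.
  intros HK. exists (3^(Z.of_nat K - 1)).
  replace (Z.of_nat K + 1) with ((Z.of_nat K - 1) + 2) by lia.
  rewrite Z.pow_add_r by lia. reflexivity.
Qed.

Ltac kill d := exfalso;
  match goal with H : complete_mod L ?m |- _ =>
    apply (inc_div m d); [first [exact inc8|exact inc12|exact inc18|exact inc21|exact inc28|exact inc49]
      |lia| |lia|exact H] end.

Lemma allowed_mul d q : allowed d -> allowed q -> complete_mod L (d*q) -> allowed (d*q).
Proof.
  intros Hd Hq Hc. unfold allowed in Hd, Hq.
  destruct Hd as [->|[->|[->|[->|[->|[K ->]]]]]];
  destruct Hq as [->|[->|[->|[->|[->|[K' ->]]]]]];
  try (unfold allowed; simpl; tauto).
  all: try (kill 8; apply Z.mod_divide; [lia|vm_compute; reflexivity]).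
  all: try (kill 12; apply Z.mod_divide; [lia|vm_compute; reflexivity]).
  all: try (kill 21; apply Z.mod_divide; [lia|vm_compute; reflexivity]).
  all: try (kill 28; apply Z.mod_divide; [lia|vm_compute; reflexivity]).
  all: try (kill 49; apply Z.mod_divide; [lia|vm_compute; reflexivity]).
  all: try (right; right; right; right; right; exists (K + K' + 1)%nat;
            rewrite <- Z.pow_add_r by lia; f_equal; lia).
  all: try match goal with |- allowed (3 ^ ?e * ?q) => rewrite (Z.mul_comm (3 ^ e) q) in Hc |- * end.
  all: match goal with K : nat |- _ => pose proof (pow3_ge K); assert (H3 : (3 | 3^(Z.of_nat K + 1)))
         by (exists (3 ^ Z.of_nat K); rewrite Z.pow_add_r by lia; ring) end.
  all: try (kill 12; change 12 with (4 * 3); apply Z.mul_divide_mono_l; exact H3).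
  all: try (kill 21; change 21 with (7 * 3); apply Z.mul_divide_mono_l; exact H3).
  all: try (kill 21; apply Z.divide_trans with (7 * 3^(Z.of_nat K' + 1)); [change 21 with (7 * 3); apply Z.mul_divide_mono_l; exact H3|exists 2; ring]).
  all: try (kill 21; apply Z.divide_trans with (7 * 3^(Z.of_nat K + 1)); [change 21 with (7 * 3); apply Z.mul_divide_mono_l; exact H3|exists 2; ring]).
  all: try (kill 18; change 18 with (6 * 3); apply Z.mul_divide_mono_l; exact H3).
  all: match goal with K : nat |- _ => destruct K as [|K] end;
       [right; right; left; reflexivity|
        kill 18; change 18 with (2 * 9); apply Z.mul_divide_mono_l; apply pow3_9; lia].
Qed.

Lemma exists_div m : 2 <= m -> (forall d, 1 < d < m -> ~ (d | m)) \/ exists d q, 1 < d < m /\ 1 < q < m /\ m = d * q.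
Proof.
  intros Hm. destruct (prime_dec m) as [Hp|Hp].
  - left. intros d Hd Hdm. destruct (prime_divisors m Hp d Hdm) as [?|[?|[?|?]]]; lia.
  - right. destruct (not_prime_divide m ltac:(lia) Hp) as [d [Hd [q Hq]]].
    exists d, q. nia.
Qed.

Definition prime_fact : Prop := forall p, 2 <= p -> (forall d, 1 < d < p -> ~ (d | p)) ->
  p <> 2 -> p <> 3 -> p <> 5 -> p <> 7 -> ~ complete_mod L p.

Lemma classify (PF : prime_fact) : forall m, 2 <= m -> complete_mod L m -> allowed m.
Proof.
  intros m. remember (Z.to_nat m) as N eqn:HN. revert m HN.
  induction N as [N IH] using lt_wf_ind. intros m HN Hm Hc.
  destruct (exists_div m Hm) as [Hp|[d [q [Hd [Hq ->]]]]].
  - assert (m = 2 \/ m = 3 \/ m = 5 \/ m = 7 \/ (m <> 2 /\ m <> 3 /\ m <> 5 /\ m <> 7)) as [->|[->|[->|[->|[? [? [? ?]]]]]]] by lia.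
    + left; reflexivity.
    + right; right; right; right; right. exists 0%nat. reflexivity.
    + exfalso; exact (inc5 Hc).
    + right; right; right; left; reflexivity.
    + exfalso. exact (PF m Hm Hp H H0 H1 H2 Hc).
  - apply allowed_mul; auto.
    + apply (IH (Z.to_nat d)); [rewrite HN; apply Z2Nat.inj_lt; [lia|nia|nia]|reflexivity|lia|].
      apply (complete_div L (d*q) d); [lia| |nia|exact Hc]. exists q; ring.
    + apply (IH (Z.to_nat q)); [rewrite HN; apply Z2Nat.inj_lt; [lia|nia|nia]|reflexivity|lia|].
      apply (complete_div L (d*q) q); [lia| |nia|exact Hc]. exists d; ring.
Qed.

Theorem main_of (PF : prime_fact) (m : Z) (hm : 2 <= m) :
  complete_mod L m ->
  forall a b : Z, Z.gcd a b = 1 -> complete_mod (G a b) m.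
Proof.
  intros Hc a b Hab.
  destruct (classify PF m hm Hc) as [->|[->|[->|[->|[->|[K ->]]]]]].
  - apply small2; auto.
  - apply small4; auto.
  - apply small6; auto.
  - apply small7; auto.
  - apply small14; auto.
  - apply pow3_case; auto.
Qed.

Module MC.
From HB Require Import structures.
From mathcomp Require Import all_boot all_order all_algebra all_field.
From mathcomp Require Import ring lra zify ssrZ.
Set Implicit Arguments. Unset Strict Implicit. Unset Printing Implicit Defensive.
Import Order.TTheory GRing.Theory Num.Theory.
Local Open Scope ring_scope.

Lemma fermat p (hp : prime p) (x : 'F_p) : x != 0 -> x ^+ p.-1 = 1.
Proof.
  move=> nx. have h := expf_card x. rewrite card_Fp // in h.
  apply: (mulfI nx). by rewrite mulr1 -exprS prednK // prime_gt0.
Qed.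

Lemma sq_pm1 (F : fieldType) (y : F) : y ^+ 2 = 1 -> y = 1 \/ y = -1.
Proof.
  move=> h. have : (y - 1) * (y + 1) = 0 by rewrite mulrDr mulr1 mulrBl mul1r -expr2 h; ring.
  move/eqP; rewrite mulf_eq0 => /orP [/eqP e|/eqP e]; [left|right].
  - by apply/eqP; rewrite -subr_eq0 e.
  - by apply/eqP; rewrite -addr_eq0 e.
Qed.

Lemma natFp0 p (hp : prime p) n : (n%:R : 'F_p) = 0 -> (p %| n)%N.
Proof.
  move=> h. have := val_Fp_nat hp n. rewrite h /= => e.
  by apply/eqP; rewrite -e.
Qed.


Lemma natFp_neq0 p (hp : prime p) n : (0 < n < p)%N -> (n%:R : 'F_p) != 0.
Proof.
  move=> /andP [h1 h2]. apply/negP => /eqP /(natFp0 hp) hd.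
  have := dvdn_leq h1 hd. by rewrite leqNgt h2.
Qed.

Lemma natFp_inj p (hp : prime p) a b : (a < p)%N -> (b < p)%N -> (a%:R : 'F_p) = b%:R -> a = b.
Proof.
  move=> ha hb e. have := val_Fp_nat hp a. have := val_Fp_nat hp b. rewrite e => -> .
  by rewrite !modn_small.
Qed.

Lemma euler p (hp : prime p) (x : 'F_p) : odd p -> x ^+ p./2 = 1 -> exists y, y ^+ 2 = x.
Proof.
  move=> op hx. set h := p./2 in hx *.
  have hp1 : h.*2 = p.-1 by rewrite /h odd_halfK.
  have hp2 := prime_gt1 hp.
  have hpos : (0 < h)%N by lia.
  case: (boolP [exists y : 'F_p, y ^+ 2 == x]) => [/existsP [y /eqP e]|nE]; first by exists y.
  exfalso.
  pose rs := x :: [seq ((i.+1)%:R : 'F_p) ^+ 2 | i <- iota 0 h].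
  have H := @max_poly_roots _ ('X^h - 1) rs.
  rewrite size_Xn_sub_1 // /rs /= size_map size_iota ltnn in H.
  suff : false by []. apply: H; first by rewrite -size_poly_eq0 size_Xn_sub_1.
  - rewrite /= rootE !hornerE hx subrr eqxx /=.
    apply/allP => z /mapP [i]. rewrite mem_iota add0n => /andP [_ hi] ->.
    rewrite rootE !hornerE -exprM mul2n hp1 fermat ?subrr //.
    apply: natFp_neq0 => //. lia.
  - rewrite /= map_inj_in_uniq ?iota_uniq ?andbT.
    + apply/mapP => [[i _ e]]. move/existsP: nE. apply. by exists (i.+1%:R); rewrite -e.
    + move=> i j. rewrite !mem_iota !add0n => /andP [_ hi] /andP [_ hj] e.
      have : ((i.+1)%:R - (j.+1)%:R) * ((i.+1)%:R + (j.+1)%:R) = 0 :> 'F_p.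
      { rewrite mulrDr !mulrBl -!expr2 e. ring. }
      move/eqP; rewrite mulf_eq0 => /orP [/eqP e1|/eqP e2].
      * apply/eqP; rewrite -eqSS; apply/eqP. apply: (natFp_inj hp); try lia.
        by apply/eqP; rewrite -subr_eq0 e1.
      * exfalso. move: e2. rewrite -natrD => /(natFp0 hp) HH.
        have HH2 : (p <= i.+1 + j.+1)%N by apply: dvdn_leq. lia.
Qed.

Lemma Fp_pm1 p (hp : prime p) : (p.-1%:R : 'F_p) = -1.
Proof.
  apply/eqP; rewrite -addr_eq0 natr1 prednK ?prime_gt0 //. by rewrite pchar_Fp_0.
Qed.

Lemma card_nz p (hp : prime p) : #|predC1 (0 : 'F_p)| = p.-1.
Proof. by rewrite cardC1 card_Fp. Qed.

Lemma sum_pow0 p (hp : prime p) : \sum_(r : 'F_p) r ^+ 0 = 0.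
Proof. under eq_bigr do rewrite expr0. by rewrite sumr_const card_Fp // pchar_Fp_0. Qed.

Lemma sum_pow_full p (hp : prime p) k : (0 < k)%N -> (p.-1 %| k)%N -> \sum_(r : 'F_p) r ^+ k = -1.
Proof.
  move=> hk /dvdnP [q hq]. rewrite (bigD1 0) //= expr0n /= gtn_eqF // add0r.
  transitivity (\sum_(r : 'F_p | r != 0) (1 : 'F_p)).
  { apply: eq_bigr => r hr. by rewrite hq mulnC exprM fermat // expr1n. }
  rewrite sumr_const. have -> : #|[pred r : 'F_p | r != 0]| = p.-1 by rewrite -(card_nz hp).
  by rewrite Fp_pm1.
Qed.

Lemma sum_pow p (hp : prime p) k : (0 < k)%N -> ~~ (p.-1 %| k)%N -> \sum_(r : 'F_p) r ^+ k = 0.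
Proof.
  move=> hk nd.
  have hp1 : (0 < p.-1)%N by have := prime_gt1 hp; lia.
  set k' := (k %% p.-1)%N.
  have hk' : (0 < k' < p.-1)%N.
  { rewrite /k' ltn_mod hp1 andbT lt0n. by rewrite -/(dvdn _ _). }
  have ha : exists a : 'F_p, a != 0 /\ a ^+ k != 1.
  { case: (boolP [exists a : 'F_p, (a != 0) && (a ^+ k != 1)]) => [/existsP [a /andP [h1 h2]]|nE].
    { by exists a. }
    exfalso.
    have H := @max_poly_roots _ ('X^k' - 1) (enum (predC1 (0 : 'F_p))).
    rewrite size_Xn_sub_1 ?(proj1 (andP hk')) // -cardE card_nz // in H.
    have : (p.-1 < k'.+1)%N.
    { apply: H; first by rewrite -size_poly_eq0 size_Xn_sub_1 // (proj1 (andP hk')).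
      - apply/allP => a. rewrite mem_enum /= => ha. rewrite rootE !hornerE subr_eq0.
        have : ~~ ((a != 0) && (a ^+ k != 1)).
        { apply/negP => hh. move/existsP: nE. apply. by exists a. }
        have ha' : a != 0 := ha.
        rewrite ha' /= negbK => /eqP e.
        have E : a ^+ k = a ^+ k' by rewrite {1}(divn_eq k p.-1) exprD mulnC exprM fermat // expr1n mul1r.
        by rewrite -E e.
      - exact: enum_uniq. }
    lia. }
  case: ha => a [ha0 hak].
  have e : \sum_(r : 'F_p) r ^+ k = a ^+ k * \sum_(r : 'F_p) r ^+ k.
  { rewrite mulr_sumr. rewrite (reindex_inj (mulfI ha0)) /=.
    apply: eq_bigr => r _. by rewrite exprMn. }
  apply/eqP. move: e => /eqP. rewrite -subr_eq0 -{1}[\sum_r _]mul1r -mulrBl mulf_eq0.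
  case/orP => // /eqP h. exfalso. move: hak. by rewrite eq_sym -subr_eq0 h eqxx.
Qed.

Lemma sum_binom p (c : 'F_p) d h :
  \sum_(r : 'F_p) (c + r ^+ d) ^+ h =
  \sum_(i < h.+1) (c ^+ (h - i) *+ 'C(h, i)) * \sum_(r : 'F_p) r ^+ (d * i).
Proof.
  under eq_bigr do rewrite exprDn. rewrite exchange_big /=. apply: eq_bigr => i _.
  rewrite mulr_sumr. apply: eq_bigr => r _. by rewrite -exprM mulrnAl.
Qed.

Lemma sum_eval p (hp : prime p) (c : 'F_p) d h : (0 < h)%N -> (0 < d)%N ->
  (forall i, (0 < i <= h)%N -> (p.-1 %| d * i)%N = (i == h)) ->
  \sum_(r : 'F_p) (c + r ^+ d) ^+ h = -1.
Proof.
  move=> hh hd hdiv. rewrite sum_binom big_ord_recr /= subnn expr0 binn mulr1n mul1r.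
  rewrite sum_pow_full //; last by rewrite hdiv ?eqxx ?hh ?leqnn.
  2: by rewrite muln_gt0 hd hh.
  rewrite big1 ?add0r // => i _.
  have hi := ltn_ord i.
  case: (posnP i) => [->|hi0].
  - by rewrite muln0 sum_pow0 // mulr0.
  - rewrite sum_pow ?mulr0 //; first by rewrite muln_gt0 hd hi0.
    rewrite hdiv; first by rewrite ltn_eqF.
    by rewrite hi0 ltnW.
Qed.

Fixpoint lp p (n : nat) : 'F_p * 'F_p :=
  match n with O => (2, 1) | S k => let (x, y) := lp p k in (y, x + y) end.

Lemma lp_S p n : lp p n.+1 = ((lp p n).2, (lp p n).1 + (lp p n).2).
Proof. by rewrite /=; case: (lp p n). Qed.

Lemma lp_Q p n : (lp p n).2 ^+ 2 - (lp p n).1 * (lp p n).2 - (lp p n).1 ^+ 2 = -5 * (-1) ^+ n.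
Proof.
  elim: n => [|n IH]; first by rewrite /= expr0; ring.
  rewrite lp_S /= [(-1) ^+ n.+1]exprS mulrCA -IH. ring.
Qed.

Lemma lp_good p n : exists s : 'F_p, s ^+ 2 = 5 * ((lp p n).1 ^+ 2 - 4 * (-1) ^+ n).
Proof.
  exists (2 * (lp p n).2 - (lp p n).1).
  have e := lp_Q p n. set x := (lp p n).1 in e *. set y := (lp p n).2 in e *.
  have -> : 5 * (x ^+ 2 - 4 * (-1) ^+ n) = 5 * x ^+ 2 + 4 * (-5 * (-1) ^+ n) :> 'F_p by ring.
  rewrite -e. ring.
Qed.

Lemma odd_ne2 p : odd p -> p != 2.
Proof. by apply: contraTneq => ->. Qed.

Lemma two_neq0 p (hp : prime p) (op : odd p) : (2%:R : 'F_p) != 0.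
Proof. apply: natFp_neq0 => //. have := prime_gt1 hp. have := odd_ne2 op. lia. Qed.

Lemma hp1 p (op : odd p) : (p./2 * 2)%N = p.-1.
Proof. by rewrite muln2 odd_halfK. Qed.

Lemma hpos p (hp : prime p) (op : odd p) : (0 < p./2)%N.
Proof. have := hp1 op. have := prime_gt1 hp. lia. Qed.

Lemma pm1_of_nz p (hp : prime p) (op : odd p) (x : 'F_p) : x != 0 ->
  x ^+ p./2 = 1 \/ x ^+ p./2 = -1.
Proof. move=> nx. apply: sq_pm1. by rewrite -exprM hp1 // fermat. Qed.

Lemma sq_chi p (hp : prime p) (op : odd p) (s : 'F_p) : s != 0 -> (s ^+ 2) ^+ p./2 = 1.
Proof. move=> ns. by rewrite -exprM mulnC hp1 // fermat. Qed.

Lemma one_neq_m1 p (hp : prime p) (op : odd p) : (1 : 'F_p) != -1.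
Proof.
  apply/eqP => e. move/negP: (two_neq0 hp op). apply. by rewrite -[2%:R]/(1 + 1) {1}e addNr.
Qed.

Lemma no_sq5 p (hp : prime p) (op : odd p) (t s : 'F_p) :
  (5 : 'F_p) ^+ p./2 = -1 -> t ^+ p./2 = 1 -> s ^+ 2 = 5 * t -> False.
Proof.
  move=> h5 ht e.
  have : (s ^+ 2) ^+ p./2 = -1 by rewrite e exprMn h5 ht mulr1.
  case: (eqVneq s 0) => [->|ns].
  - rewrite expr0n /= expr0n gtn_eqF ?hpos // => /eqP. by rewrite eq_sym oppr_eq0 oner_eq0.
  - rewrite sq_chi // => e1. move/negP: (one_neq_m1 hp op). apply. by apply/eqP.
Qed.

Lemma four_chi p (hp : prime p) (op : odd p) : (4 : 'F_p) ^+ p./2 = 1.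
Proof.
  have -> : (4 : 'F_p) = 2%:R ^+ 2 by rewrite expr2 -natrM.
  apply: sq_chi => //. exact: two_neq0.
Qed.

Lemma D2 p (hp : prime p) (op : odd p) :
  (5 : 'F_p) ^+ p./2 = -1 -> (-1 : 'F_p) ^+ p./2 = 1 -> (forall r : 'F_p, exists n, (lp p n).1 = r) -> False.
Proof.
  move=> h5 hm1 hc. case: (hc 0) => n hn. case: (lp_good p n) => s.
  rewrite hn expr0n /= sub0r => e. apply: (no_sq5 hp op h5 _ e).
  have -> : - (4 * (-1) ^+ n) = (-1) * 4 * (-1) ^+ n :> 'F_p by ring.
  rewrite !exprMn four_chi // hm1 mul1r -exprM mulnC exprM hm1 expr1n.
  by rewrite mulr1.
Qed.

Lemma prime_dvd_small p q : prime p -> prime q -> (p %| q)%N -> p = q.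
Proof. move=> hp hq hd. apply/(prime_nt_dvdP _ _) => //. by rewrite neq_ltn prime_gt1 ?orbT. Qed.

Lemma natFp_eq0_prime p (hp : prime p) q : prime q -> (q%:R : 'F_p) = 0 -> p = q.
Proof. move=> hq /(natFp0 hp). exact: prime_dvd_small. Qed.

Lemma cond2 p (op : odd p) i : (0 < i <= p./2)%N -> (p.-1 %| 2 * i)%N = (i == p./2).
Proof.
  move=> /andP [h0 h1]. rewrite -hp1 // mulnC dvdn_pmul2l //.
  apply/idP/eqP => [hd|->]; last exact: dvdnn.
  have := dvdn_leq h0 hd. lia.
Qed.

Lemma cond4 p (op : odd p) i : odd p./2 -> (0 < i <= p./2)%N -> (p.-1 %| 4 * i)%N = (i == p./2).
Proof.
  move=> ho /andP [h0 h1]. rewrite -hp1 // mulnC -[4%N]/(2 * 2)%N -mulnA dvdn_pmul2l //.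
  rewrite Gauss_dvdr ?coprimen2 //.
  apply/idP/eqP => [hd|->]; last exact: dvdnn.
  have := dvdn_leq h0 hd. lia.
Qed.

Lemma D3_exists p (hp : prime p) (op : odd p) : p != 3 -> p != 7 ->
  (-1 : 'F_p) ^+ p./2 = -1 ->
  exists r : 'F_p, (r ^+ 2 - 4) ^+ p./2 = 1 /\ (r ^+ 2 + 4) ^+ p./2 = 1.
Proof.
  move=> p3 p7 hm1. set h := p./2 in hm1 *.
  have hodd : odd h.
  { apply/negPn/negP => he. move: hm1. rewrite -signr_odd (negbTE he) expr0 => e.
    move/negP: (one_neq_m1 hp op). by apply; apply/eqP. }
  case: (boolP [exists r : 'F_p, ((r ^+ 2 - 4) ^+ h == 1) && ((r ^+ 2 + 4) ^+ h == 1)]) =>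
    [/existsP [r /andP [/eqP h1 /eqP h2]]|nE]; first by exists r.
  exfalso.
  have n2 := two_neq0 hp op.
  have n4 : (4 : 'F_p) != 0.
  { have -> : (4 : 'F_p) = 2%:R * 2%:R by rewrite -natrM. by rewrite mulf_neq0. }
  pose t (r : 'F_p) := (1 + (r ^+ 2 - 4) ^+ h) * (1 + (r ^+ 2 + 4) ^+ h).
  have Hsum : \sum_r t r = -3.
  { rewrite /t. under eq_bigr => r _.
    { rewrite mulrDr !mulrDl !mul1r !mulr1 -exprMn.
      have -> : (r ^+ 2 - 4) * (r ^+ 2 + 4) = -16 + r ^+ 4 by ring.
      rewrite (addrC (r ^+ 2) (-4)) (addrC (r ^+ 2) 4). over. }
    rewrite !big_split /= sumr_const (card_Fp hp) (pchar_Fp_0 hp).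
    rewrite !(sum_eval hp) //; try (move=> i hi; rewrite ?cond2 ?cond4 //); try exact: hpos.
    ring. }
  have hchi4 := four_chi hp op.
  have Ht0 : forall r, r != 2 -> r != -2 -> t r = 0.
  { move=> r r2 rm2.
    have na : r ^+ 2 - 4 != 0.
    { have -> : r ^+ 2 - 4 = (r - 2) * (r + 2) :> 'F_p by ring.
      rewrite mulf_neq0 // ?subr_eq0 // addr_eq0 //. }
    have nb : r ^+ 2 + 4 != 0.
    { apply/negP => /eqP e.
      have e' : r ^+ 2 = -4 by apply/eqP; rewrite -addr_eq0 e.
      have nr : r != 0.
      { apply/negP => /eqP r0. move: e'. rewrite r0 expr0n /= => /eqP.
        rewrite eq_sym oppr_eq0. by apply/negP. }
      have := sq_chi hp op nr. rewrite e'.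
      have -> : (-4 : 'F_p) = -1 * 4 by ring.
      rewrite exprMn hm1 hchi4 mulr1 => e2. move/negP: (one_neq_m1 hp op). by apply; apply/eqP. }
    rewrite /t.
    case: (pm1_of_nz hp op na) => ea; last by rewrite ea addrN mul0r.
    case: (pm1_of_nz hp op nb) => eb; last by rewrite eb addrN mulr0.
    exfalso. move/negP: nE. apply. apply/existsP. exists r. by rewrite ea eb eqxx. }
  have n8 : (8 : 'F_p) != 0.
  { have -> : (8 : 'F_p) = 2%:R * 4 by rewrite -natrM. by rewrite mulf_neq0. }
  have Ht2 : forall r, r ^+ 2 = 4 -> t r = 1 + 8 ^+ h.
  { move=> r e. rewrite /t e subrr expr0n /= gtn_eqF ?hpos // addr0 mul1r.
    have -> : (4 + 4 : 'F_p) = 8 by rewrite -natrD. done. }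
  have nm2 : (-2 : 'F_p) != 2.
  { apply/negP => /eqP e. have : (4 : 'F_p) = 0.
    { have -> : (4 : 'F_p) = 2 - (-2) by ring. by rewrite e subrr. }
    by apply/eqP. }
  move: Hsum. rewrite (bigD1 2) // (bigD1 (-2)) //= big1; last first.
  { move=> r /andP [r2 rm2]. exact: Ht0. }
  rewrite !Ht2; try by (rewrite ?sqrrN; ring).
  rewrite addr0.
  case: (pm1_of_nz hp op n8) => -> e.
  - have : (7%:R : 'F_p) = 0.
    { have -> : (7%:R : 'F_p) = (1 + 1) + (1 + 1) - (-3) by ring. by rewrite e subrr. }
    move/(natFp_eq0_prime hp) => /(_ isT) e7. by move/eqP: p7.
  - have : (3%:R : 'F_p) = 0.
    { have -> : (3%:R : 'F_p) = - (-3) by ring. by rewrite -e addrN add0r oppr0. }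
    move/(natFp_eq0_prime hp) => /(_ isT) e3. by move/eqP: p3.
Qed.

Lemma D3 p (hp : prime p) (op : odd p) : p != 3 -> p != 7 ->
  (5 : 'F_p) ^+ p./2 = -1 -> (-1 : 'F_p) ^+ p./2 = -1 ->
  (forall r : 'F_p, exists n, (lp p n).1 = r) -> False.
Proof.
  move=> p3 p7 h5 hm1 hc.
  case: (D3_exists hp op p3 p7 hm1) => r [h1 h2].
  case: (hc r) => n hn. case: (lp_good p n) => s. rewrite hn -signr_odd.
  case: (odd n) => /= e.
  - apply: (no_sq5 hp op h5 _ e). by rewrite expr1 mulrN1 opprK.
  - apply: (no_sq5 hp op h5 _ e). by rewrite expr0 mulr1.
Qed.

Lemma lp_closed p (x y : 'F_p) : x + y = 1 -> x ^+ 2 = x + 1 -> y ^+ 2 = y + 1 ->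
  forall n, lp p n = (x ^+ n + y ^+ n, x ^+ n.+1 + y ^+ n.+1).
Proof.
  move=> hs hx hy.
  have ex : forall z : 'F_p, z ^+ 2 = z + 1 -> forall n, z ^+ n.+2 = z ^+ n + z ^+ n.+1.
  { move=> z hz n. by rewrite [z ^+ n.+2]exprS [z ^+ n.+1]exprS mulrA -expr2 hz mulrDl mul1r addrC. }
  elim => [|n IH].
  - by rewrite /= !expr0 !expr1 hs.
  - rewrite lp_S IH /=. congr (_, _).
    rewrite (ex x hx) (ex y hy). ring.
Qed.

Lemma pow_mod p (hp : prime p) (x : 'F_p) n : x != 0 -> x ^+ n = x ^+ (n %% p.-1).
Proof. move=> nx. by rewrite {1}(divn_eq n p.-1) exprD mulnC exprM fermat // expr1n mul1r. Qed.

Lemma D1 p (hp : prime p) (op : odd p) :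
  (5 : 'F_p) ^+ p./2 = 1 -> (forall r : 'F_p, exists n, (lp p n).1 = r) -> False.
Proof.
  move=> h5 hc.
  case: (euler hp op h5) => s0 es.
  have n2 := two_neq0 hp op.
  set q := (2%:R : 'F_p)^-1.
  have hq : 2%:R * q = 1 by rewrite /q mulfV.
  set x := (1 + s0) * q. set y := (1 - s0) * q.
  have hs : x + y = 1.
  { rewrite /x /y -mulrDl. have -> : 1 + s0 + (1 - s0) = 2%:R :> 'F_p by ring. exact: hq. }
  have hx : x ^+ 2 = x + 1.
  { apply/eqP; rewrite -subr_eq0; apply/eqP.
    have -> : x ^+ 2 - (x + 1) = q ^+ 2 * (s0 ^+ 2 - 5) + (2%:R * q - 1) * (3%:R * q + s0 * q + 1)
      by rewrite /x; ring.
    by rewrite es hq !subrr mulr0 mul0r addr0. }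
  have hy : y ^+ 2 = y + 1.
  { apply/eqP; rewrite -subr_eq0; apply/eqP.
    have -> : y ^+ 2 - (y + 1) = q ^+ 2 * (s0 ^+ 2 - 5) + (2%:R * q - 1) * (3%:R * q - s0 * q + 1)
      by rewrite /y; ring.
    by rewrite es hq !subrr mulr0 mul0r addr0. }
  have hxy : x * y = -1.
  { have -> : x * y = q ^+ 2 * (1 - s0 ^+ 2) by rewrite /x /y; ring.
    rewrite es. have -> : q ^+ 2 * (1 - 5) = - ((2%:R * q) ^+ 2) by ring.
    by rewrite hq expr1n. }
  have nx : x != 0.
  { apply/negP => /eqP e. move: hxy. rewrite e mul0r => /eqP. by rewrite eq_sym oppr_eq0 oner_eq0. }
  have ny : y != 0.
  { apply/negP => /eqP e. move: hxy. rewrite e mulr0 => /eqP. by rewrite eq_sym oppr_eq0 oner_eq0. }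
  have hp1' : (0 < p.-1)%N by have := prime_gt1 hp; lia.
  have sub : [set: 'F_p] \subset [set (lp p (nat_of_ord i)).1 | i : 'I_p.-1].
  { apply/subsetP => r _. case: (hc r) => n hn. apply/imsetP.
    exists (Ordinal (ltn_pmod n hp1')) => //.
    rewrite -hn !(lp_closed hs hx hy) /= (pow_mod hp n nx) (pow_mod hp n ny). done. }
  have := subset_leq_card sub. rewrite cardsT card_Fp //.
  move=> H. have := leq_trans H (leq_imset_card _ _). rewrite card_ord.
  have := prime_gt1 hp. lia.
Qed.

Lemma Dall p (hp : prime p) : p != 2 -> p != 3 -> p != 5 -> p != 7 ->
  ~ (forall r : 'F_p, exists n, (lp p n).1 = r).
Proof.
  move=> p2 p3 p5 p7 hc.
  have op : odd p by case: (even_prime hp) => // e; move/eqP: p2.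
  have n5 : (5 : 'F_p) != 0.
  { apply/negP => /eqP e. have := natFp_eq0_prime hp (q := 5) isT e. by move/eqP: p5. }
  have nm1 : (-1 : 'F_p) != 0 by rewrite oppr_eq0 oner_eq0.
  case: (pm1_of_nz hp op n5) => h5.
  - exact: (D1 hp op h5 hc).
  - case: (pm1_of_nz hp op nm1) => hm1.
    + exact: (D2 hp op h5 hm1 hc).
    + exact: (D3 hp op p3 p7 h5 hm1 hc).
Qed.

Local Close Scope ring_scope.

Definition toF (p : nat) (z : Z) : 'F_p := ((int_of_Z z)%:~R)%R.

Lemma toF_add p x y : toF p (x + y)%Z = (toF p x + toF p y)%R.
Proof. by rewrite /toF -intrD -raddfD. Qed.

Lemma toF_mul p x y : toF p (x * y)%Z = (toF p x * toF p y)%R.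
Proof. by rewrite /toF -intrM -rmorphM. Qed.

Lemma toF_nat p n : toF p (Z.of_nat n) = (n%:R)%R.
Proof.
  rewrite /toF. have -> : int_of_Z (Z.of_nat n) = Posz n.
  { by rewrite -[Z.of_nat n]/(Z_of_int (Posz n)) Z_of_intK. }
  done.
Qed.

Lemma toF_gib p n : toF p (fst (gib_aux 2 1 n)) = (lp p n).1 /\ toF p (snd (gib_aux 2 1 n)) = (lp p n).2.
Proof.
  elim: n => [|n [IH1 IH2]].
  - by split; rewrite /toF /=.
  - rewrite gib_S lp_S /=. by rewrite toF_add IH1 IH2.
Qed.

Lemma toF_p p (hp : prime p) : toF p (Z.of_nat p) = 0%R.
Proof. by rewrite toF_nat pchar_Fp_0. Qed.

Lemma toF_mod p (hp : prime p) x y : (x mod Z.of_nat p = y mod Z.of_nat p)%Z -> toF p x = toF p y.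
Proof.
  move=> E.
  have -> : x = (y + Z.of_nat p * (x / Z.of_nat p - y / Z.of_nat p))%Z.
  { have := Z.div_mod x (Z.of_nat p). have := Z.div_mod y (Z.of_nat p).
    have := prime_gt1 hp. lia. }
  by rewrite toF_add toF_mul (toF_p hp) mul0r addr0.
Qed.

Lemma prime_fact_proof : prime_fact.
Proof.
  rewrite /prime_fact => p Hp2 Hirr H2 H3 H5 H7 Hc.
  set pn := Z.to_nat p.
  have Ep : p = Z.of_nat pn by rewrite /pn Z2Nat.id //; lia.
  have hp : prime pn.
  { apply/primeP; split; first by lia.
    move=> d /dvdnP [k hk]. rewrite /=.
    case: (boolP (d == 1%nat)) => d1; first by apply/orP; left.
    case: (boolP (d == pn)) => dp; first by apply/orP; right.
    exfalso. apply: (Hirr (Z.of_nat d)).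
    - move/eqP: d1 => d1. move/eqP: dp => dp.
      have kpos : (0 < k)%nat.
      { rewrite lt0n. apply/eqP => k0. rewrite k0 mul0n in hk. lia. }
      have dle : (d <= pn)%nat by rewrite hk leq_pmull.
      have : d <> 0%nat by move=> d0; rewrite d0 muln0 in hk; lia.
      lia.
    - exists (Z.of_nat k). rewrite Ep hk. lia. }
  apply: (Dall hp); try (apply/eqP; lia).
  move=> r. case: (Hc (Z.of_nat (nat_of_ord r))) => n [_ Hn]. exists n.
  rewrite Ep in Hn. have := toF_mod hp Hn. rewrite L_gib (toF_gib pn n).1 toF_nat => ->.
  apply: val_inj. rewrite /= val_Fp_nat // modn_small //.
  apply: leq_trans (ltn_ord r) _. by rewrite Fp_cast.
Qed.

End MC.

Theorem mainTheorem10 (m : Z) (hm : 2 <= m) :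
  complete_mod L m ->
  forall a b : Z, Z.gcd a b = 1 -> complete_mod (G a b) m.
Proof. exact (main_of MC.prime_fact_proof m hm). Qed.
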